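(* Let $G$ be a finite simple graph, $s\geq1$, $e_1,\dots,e_s$ edges of $G$ (repetitions allowed), and $J=(I(G)^{s+1}:e_1\cdots e_s)$. Then $J^{\mathrm{pol}}$ is the edge ideal of the graph $G'$ whose vertex set is $V(G)\cup\{u' : u\in V(G)$ is even-connected to itself with respect to $e_1\cdots e_s\}$ ($u'$ a new vertex) and whose edges are: (1) all edges of $G$; (2) $uv$ for every pair of distinct vertices $u\neq v$ of $G$ that are even-connected with respect to $e_1\cdots e_s$; (3) $uu'$ for every vertex $u$ even-connected to itself with respect to $e_1\cdots e_s$ (so $u'$ has only the neighbor $u$).
   Context: $S=K[x_1,\dots,x_n]$ with the $x_i$ the vertices of $G$, $I(G)=(xy : xy\text{ an edge})$, edges identified with monomials, $(J:m)=\{f: fm\in J\}$; $J$ is generated by degree-2 monomials. Polarization: for an ideal $J\subseteq K[x_1,\dots,x_n]$ generated by quadratic monomials, $J^{\mathrm{pol}}\subseteq K[x_1,\dots,x_n,x_1',\dots,x_n']$ is the ideal generated by all $x_ix_j$ ($i\neq j$) with $x_ix_j\in J$ and all $x_kx_k'$ with $x_k^2\in J$. Even-connection: $u,v$ (possibly equal) are even-connected with respect to $e_1,\dots,e_s$ if there is a sequence of vertices $p_0,\dots,p_{2k+1}$, $k\ge1$ (repeats allowed), with (1) $p_0=u$, $p_{2k+1}=v$; (2) for all $0\le l\le k-1$, $p_{2l+1}p_{2l+2}=e_i$ for some $i$; (3) for every $i$, $|\{l\ge0: p_{2l+1}p_{2l+2}=e_i\}|\le|\{j: e_j=e_i\}|$;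 (4) each $p_rp_{r+1}$, $0\le r\le 2k$, is an edge of $G$. *)

(* Defs.v *)
From HB Require Import structures.
From mathcomp Require Import all_boot all_order all_algebra.
From mathcomp Require Import mpoly.
Set Implicit Arguments. Unset Strict Implicit. Unset Printing Implicit Defensive.
Import GRing.Theory.
Local Open Scope ring_scope.

Definition ideal_gen (K : fieldType) (m : nat) (S : {mpoly K[m]} -> Prop)
  (f : {mpoly K[m]}) : Prop :=
  exists r : seq ({mpoly K[m]} * {mpoly K[m]}),
    (forall p, p \in r -> S p.2) /\ f = \sum_(p <- r) p.1 * p.2.

Definition ideal_pow (K : fieldType) (m : nat) (I : {mpoly K[m]} -> Prop)
  (k : nat) : {mpoly K[m]} -> Prop :=
  ideal_gen (fun g => exists fs : seq {mpoly K[m]},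
      size fs = k /\ (forall h, h \in fs -> I h) /\ g = \prod_(h <- fs) h).

Definition colon (K : fieldType) (m : nat) (J : {mpoly K[m]} -> Prop)
  (g : {mpoly K[m]}) : {mpoly K[m]} -> Prop := fun f => J (f * g).

(* Edges are given as ordered pairs of vertices; two pairs denote the same
   edge iff they agree as unordered pairs. *)
Definition same_edge (n : nat) (a b : 'I_n * 'I_n) : bool :=
  ((a.1 == b.1) && (a.2 == b.2)) || ((a.1 == b.2) && (a.2 == b.1)).

Definition edge_mon (K : fieldType) (n : nat) (a : 'I_n * 'I_n) : {mpoly K[n]} :=
  'X_a.1 * 'X_a.2.

Definition edge_ideal (K : fieldType) (n : nat) (G : rel 'I_n) :
  {mpoly K[n]} -> Prop :=
  ideal_gen (fun g => exists u v : 'I_n, G u v /\ g = 'X_u * 'X_v).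

Definition even_connected (n s : nat) (G : rel 'I_n) (e : 'I_s -> 'I_n * 'I_n)
  (u v : 'I_n) : Prop :=
  exists (k : nat) (p : nat -> 'I_n),
    [/\ (1 <= k)%N, p 0%N = u & p (2 * k + 1)%N = v] /\
    [/\ (forall l, (l < k)%N -> exists i : 'I_s,
            same_edge (p (2 * l + 1)%N, p (2 * l + 2)%N) (e i)),
        (forall i : 'I_s,
            (count (fun l => same_edge (p (2 * l + 1)%N, p (2 * l + 2)%N) (e i))
                   (iota 0 k)
             <= #|[set j : 'I_s | same_edge (e j) (e i)]|)%N)
      & (forall r, (r < 2 * k + 1)%N -> G (p r) (p r.+1))].

(* Polarization of a quadratic monomial ideal J of K[x_1..x_n] into
   K[x_1..x_n,x_1'..x_n'] = {mpoly K[n + n]}: x_i is variable lshift n i,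
   x_i' is variable rshift n i. *)
Definition polarization (K : fieldType) (n : nat) (J : {mpoly K[n]} -> Prop) :
  {mpoly K[n + n]} -> Prop :=
  ideal_gen (fun g =>
    (exists i j : 'I_n, [/\ i != j, J ('X_i * 'X_j)
                          & g = 'X_(lshift n i) * 'X_(lshift n j)]) \/
    (exists k : 'I_n, J ('X_k ^+ 2) /\ g = 'X_(lshift n k) * 'X_(rshift n k))).

Definition edge_ideal_G' (K : fieldType) (n s : nat) (G : rel 'I_n)
  (e : 'I_s -> 'I_n * 'I_n) : {mpoly K[n + n]} -> Prop :=
  ideal_gen (fun g =>
    (exists u v : 'I_n, G u v /\ g = 'X_(lshift n u) * 'X_(lshift n v)) \/
    (exists u v : 'I_n, [/\ u != v, even_connected G e u v
                          & g = 'X_(lshift n u) * 'X_(lshift n v)]) \/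
    (exists u : 'I_n, even_connected G e u u
                       /\ g = 'X_(lshift n u) * 'X_(rshift n u))).

(* Main.v *)
Require Import Defs.
From HB Require Import structures.
From mathcomp Require Import all_boot all_order all_algebra.
From mathcomp Require Import mpoly.
From mathcomp Require Import zify ring.
Set Implicit Arguments. Unset Strict Implicit. Unset Printing Implicit Defensive.
Import GRing.Theory.
Local Open Scope ring_scope.

Definition degL (n : nat) (L : seq ('I_n * 'I_n)) (v : 'I_n) : nat :=
  (\sum_(x <- L) ((x.1 == v) + (x.2 == v)))%N.

Section Dir1.
Variables (K : fieldType) (n : nat) (G : rel 'I_n).


Definition mL (L : seq ('I_n * 'I_n)) : 'X_{1..n} :=
  (\sum_(x <- L) (U_(x.1) + U_(x.2)))%MM.

Lemma mLE L v : mL L v = degL L v.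
Proof. by rewrite /mL mnm_sumE; apply: eq_bigr => x _; rewrite mnmDE !mnm1E. Qed.

Lemma prod_edge L : \prod_(x <- L) @edge_mon K n x = 'X_[mL L].
Proof.
rewrite /mL; elim: L => [|x L IH]; first by rewrite !big_nil mpolyX0.
by rewrite !big_cons IH !mpolyXD.
Qed.

Definition Q (d : nat) (f : {mpoly K[n]}) :=
  forall m, m \in msupp f -> exists L : seq ('I_n * 'I_n),
    [/\ size L = d, forall x, x \in L -> G x.1 x.2 & forall v, (degL L v <= m v)%N].

Lemma Q0 f : Q 0 f.
Proof. by move=> m _; exists [::]; split => // v; rewrite /degL big_nil. Qed.

Lemma QD d f g : Q d f -> Q d g -> Q d (f + g).
Proof.
move=> Hf Hg m /msuppD_le; rewrite mem_cat => /orP[]; [exact: Hf | exact: Hg].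
Qed.

Lemma Qzero d : Q d 0.
Proof. by move=> m; rewrite msupp0. Qed.

Lemma Qsum (T : eqType) d (r : seq T) (F : T -> {mpoly K[n]}) :
  (forall x, x \in r -> Q d (F x)) -> Q d (\sum_(x <- r) F x).
Proof.
elim: r => [|x r IH] H; first by rewrite big_nil; exact: Qzero.
rewrite big_cons; apply: QD; first by apply: H; rewrite inE eqxx.
by apply: IH => y hy; apply: H; rewrite inE hy orbT.
Qed.

Lemma QM a b f g : Q a f -> Q b g -> Q (a + b) (f * g).
Proof.
move=> Hf Hg m /msuppM_le /allpairsP [[m1 m2] /= [h1 h2 ->]].
have [L1 [s1 e1 d1]] := Hf _ h1; have [L2 [s2 e2 d2]] := Hg _ h2.
exists (L1 ++ L2); split.
- by rewrite size_cat s1 s2.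
- by move=> x; rewrite mem_cat => /orP[/e1|/e2].
- move=> v; rewrite /degL big_cat /= mnmDE; apply: leq_add; [exact: d1 | exact: d2].
Qed.

Lemma Qedge u v : G u v -> Q 1 ('X_u * 'X_v).
Proof.
move=> huv m; rewrite -mpolyXD msuppX inE => /eqP ->.
exists [:: (u, v)]; split => //; first by move=> x; rewrite inE => /eqP ->.
by move=> w; rewrite /degL big_seq1 mnmDE !mnm1E.
Qed.

Lemma Qideal f : edge_ideal G f -> Q 1 f.
Proof.
move=> [r [Hr ->]]; apply: Qsum => p /Hr [u [v [huv ->]]].
by rewrite -[1%N]/(0 + 1)%N; apply: QM; [exact: Q0 | exact: Qedge].
Qed.

Lemma Qprod (fs : seq {mpoly K[n]}) :
  (forall h, h \in fs -> Q 1 h) -> Q (size fs) (\prod_(h <- fs) h).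
Proof.
elim: fs => [|h fs IH] H; first by rewrite big_nil; exact: Q0.
rewrite big_cons /= -addn1 addnC; apply: QM; first by apply: H; rewrite inE eqxx.
by apply: IH => y hy; apply: H; rewrite inE hy orbT.
Qed.

Lemma Qpow d f : ideal_pow (edge_ideal G) d f -> Q d f.
Proof.
move=> [r [Hr ->]]; apply: Qsum => p /Hr [fs [sz [Hfs ->]]].
rewrite -[d]/(0 + d)%N; apply: QM; first exact: Q0.
by rewrite -sz; apply: Qprod => h /Hfs; apply: Qideal.
Qed.

End Dir1.

Section Comb.
Variables (n : nat) (G : rel 'I_n).
Hypothesis G_sym : forall u v : 'I_n, G u v = G v u.
Variables (s : nat) (e : 'I_s -> 'I_n * 'I_n).
Hypothesis he : forall i : 'I_s, G (e i).1 (e i).2.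

Lemma same_edge_sym (a b : 'I_n * 'I_n) : same_edge a b = same_edge b a.
Proof.
case: a b => [a1 a2] [b1 b2]; rewrite /same_edge /=.
by rewrite ![a1 == _]eq_sym ![a2 == _]eq_sym; case: (b1 == a1); case: (b2 == a2);
  case: (b1 == a2); case: (b2 == a1).
Qed.

Lemma same_edge_trans (a b c : 'I_n * 'I_n) :
  same_edge a b -> same_edge b c -> same_edge a c.
Proof.
case: a b c => [a1 a2] [b1 b2] [c1 c2]; rewrite /same_edge /=.
by case/orP=> /andP[/eqP-> /eqP->]; case/orP=> /andP[/eqP-> /eqP->];
  rewrite !eqxx ?orbT.
Qed.

Lemma same_edge_refl (a : 'I_n * 'I_n) : same_edge a a.
Proof. by rewrite /same_edge !eqxx. Qed.


Definition degE (idx : seq 'I_s) (v : 'I_n) : nat :=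
  (\sum_(t <- idx) (((e t).1 == v) + ((e t).2 == v)))%N.

Lemma degL_rem (x : 'I_n * 'I_n) (L : seq ('I_n * 'I_n)) v : x \in L ->
  degL L v = ((x.1 == v) + (x.2 == v) + degL (rem x L) v)%N.
Proof. by move=> xL; rewrite /degL (perm_big _ (perm_to_rem xL)) big_cons. Qed.

Lemma degE_rem t idx v : t \in idx ->
  degE idx v = (((e t).1 == v) + ((e t).2 == v) + degE (rem t idx) v)%N.
Proof. by move=> xL; rewrite /degE (perm_big _ (perm_to_rem xL)) big_cons. Qed.

Lemma degL_has (L : seq ('I_n * 'I_n)) v : (0 < degL L v)%N -> exists2 x, x \in L & (x.1 == v) || (x.2 == v).
Proof.
elim: L => [|x L IH]; first by rewrite /degL big_nil.
rewrite /degL big_cons.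
case: (boolP ((x.1 == v) || (x.2 == v))) => [h _|]; first by exists x; rewrite ?inE ?eqxx.
rewrite negb_or => /andP[/negbTE-> /negbTE->] /= /IH [y yL hy].
by exists y; rewrite // inE yL orbT.
Qed.

Lemma degE_has idx v : (0 < degE idx v)%N ->
  exists2 t, t \in idx & ((e t).1 == v) || ((e t).2 == v).
Proof.
elim: idx => [|x L IH]; first by rewrite /degE big_nil.
rewrite /degE big_cons.
case: (boolP (((e x).1 == v) || ((e x).2 == v))) => [h _|]; first by exists x; rewrite ?inE ?eqxx.
rewrite negb_or => /andP[/negbTE-> /negbTE->] /= /IH [y yL hy].
by exists y; rewrite // inE yL orbT.
Qed.

Definition W (idx : seq 'I_s) (a b : 'I_n) : Prop :=
  exists k (p : nat -> 'I_n) (ts : seq 'I_s),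
   [/\ p 0%N = a, p (2 * k + 1)%N = b, size ts = k, uniq ts & {subset ts <= idx}] /\
   (forall l t0, (l < k)%N -> same_edge (p (2 * l + 1)%N, p (2 * l + 2)%N) (e (nth t0 ts l))) /\
   (forall r, (r < 2*k+1)%N -> G (p r) (p r.+1)).

Lemma orient (x : 'I_n * 'I_n) (a : 'I_n) : (x.1 == a) || (x.2 == a) ->
  let c := if x.1 == a then x.2 else x.1 in
  [/\ forall v, ((x.1 == v) + (x.2 == v) = (a == v) + (c == v))%N,
      same_edge (a, c) x & G x.1 x.2 -> G a c].
Proof.
case: x => [x1 x2] /=; case: (eqVneq x1 a) => [->|ne] /=.
  by move=> _; split => //; rewrite /same_edge /= !eqxx.
move=> /eqP ->; split => //; first by move=> v; rewrite addnC.
- by rewrite /same_edge /= !eqxx orbT.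
- by rewrite G_sym.
Qed.

Lemma extract_step idx F a b :
  (forall idx' F' a', (size idx' < size idx)%N -> uniq idx' ->
     (forall x, x \in F' -> G x.1 x.2) -> size F' = (size idx').+1 ->
     (forall v, degL F' v = ((a' == v) + (b == v) + degE idx' v)%N) -> W idx' a' b) ->
  uniq idx -> (forall x, x \in F -> G x.1 x.2) -> size F = (size idx).+1 ->
  (forall v, degL F v = ((a == v) + (b == v) + degE idx v)%N) -> W idx a b.
Proof.
move=> IH uidx HF szF Hdeg.
have : (0 < degL F a)%N by rewrite Hdeg eqxx.
case/degL_has => f fF /orient [Hfc _ Gac].
set c := (if f.1 == a then f.2 else f.1) in Hfc Gac.
have {}Gac := Gac (HF f fF).
have HF' : forall v, (degL (rem f F) v + (c == v) = (b == v) + degE idx v)%N.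
  by move=> v; have := Hdeg v; rewrite (degL_rem _ fF) Hfc; lia.
case: (eqVneq c b) => [cb|cnb].
  exists 0%N, (fun r => if r is 0%N then a else b), [::]; split; first by split.
  split; first by move=> l t0; rewrite ltn0.
  by move=> r; rewrite muln0 add0n ltnS leqn0 => /eqP -> /=; rewrite -cb.
have : (0 < degE idx c)%N by have := HF' c; rewrite eqxx eq_sym (negbTE cnb); lia.
case/degE_has => t tI /orient [Htd same Gcd].
set d := (if (e t).1 == c then (e t).2 else (e t).1) in Htd same Gcd.
have {}Gcd := Gcd (he t).
have Hdeg' : forall v, degL (rem f F) v = ((d == v) + (b == v) + degE (rem t idx) v)%N.
  by move=> v; have := HF' v; rewrite (degE_rem _ tI) Htd; lia.
have idx0 : (0 < size idx)%N by case: (idx) tI.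
have : W (rem t idx) d b.
  apply: (IH _ (rem f F)).
  - by rewrite size_rem //; lia.
  - exact: rem_uniq.
  - by move=> x /mem_rem /HF.
  - by rewrite (size_rem fF) (size_rem tI) szF /= prednK.
  - exact: Hdeg'.
move=> [k [q [ts [[q0 qk szts uts subts] [Hsteps Hedges]]]]].
exists k.+1, (fun r => match r with 0 => a | 1 => c | r'.+2 => q r' end)%N, (t :: ts).
split; first split.
- by [].
- by rewrite (_ : (2 * k.+1 + 1 = (2 * k + 1).+2)%N) //; lia.
- by rewrite /= szts.
- rewrite /= uts andbT; apply/negP => /subts; rewrite (mem_rem_uniq _ uidx) /=.
  by rewrite !inE eqxx.
- move=> x; rewrite inE => /orP[/eqP -> //|/subts /mem_rem //].
split.
- move=> [|l] t0 hl.
    by rewrite (_ : (2 * 0 + 1 = 1)%N) // (_ : (2 * 0 + 2 = 2)%N) //=; rewrite q0.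
  rewrite (_ : (2 * l.+1 + 1 = (2 * l + 1).+2)%N); last by lia.
  rewrite (_ : (2 * l.+1 + 2 = (2 * l + 2).+2)%N); last by lia.
  by apply: Hsteps; lia.
- move=> [|[|r]] hr //=; first by rewrite q0.
  by apply: Hedges; lia.
Qed.

Lemma extract idx F a b : uniq idx -> (forall x, x \in F -> G x.1 x.2) ->
  size F = (size idx).+1 ->
  (forall v, degL F v = ((a == v) + (b == v) + degE idx v)%N) -> W idx a b.
Proof.
move: {2}(size idx) (leqnn (size idx)) => N; elim: N idx F a => [|N IH] idx F a hN.
  by apply: extract_step => idx' F' a' hlt; lia.
apply: extract_step => idx' F' a' hlt; apply: IH; lia.
Qed.

Lemma W_final a b : W (enum 'I_s) a b -> G a b \/ even_connected G e a b.
Proof.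
move=> [k [p [ts [[p0 pk szts uts subts] [Hsteps Hedges]]]]].
case: k pk szts Hsteps Hedges => [|k] pk szts Hsteps Hedges.
  by left; have := Hedges 0%N isT; rewrite p0 (_ : (2 * 0 + 1 = 1)%N) // in pk *; rewrite pk.
right; have [t0 _] : exists t0 : 'I_s, True by move: szts; case: (ts) => // t0.
exists k.+1, p; split; first by split.
split.
- by move=> l hl; exists (nth t0 ts l); apply: Hsteps.
- move=> i.
  have -> : count (fun l => same_edge (p (2 * l + 1)%N, p (2 * l + 2)%N) (e i)) (iota 0 k.+1)
          = count (fun t => same_edge (e t) (e i)) ts.
    rewrite -{1}(mkseq_nth t0 ts) /mkseq count_map szts; apply: eq_in_count => l.
    rewrite mem_iota add0n => /andP[_ hl] /=; have h := Hsteps l t0 hl.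
    apply/idP/idP => h'.
      by apply: same_edge_trans h'; rewrite same_edge_sym.
    exact: same_edge_trans h h'.
  rewrite -size_filter cardE; apply: uniq_leq_size; first exact: filter_uniq.
  by move=> x; rewrite mem_filter mem_enum inE => /andP[].
- exact: Hedges.
Qed.

End Comb.

Lemma same_edge_mon (K : fieldType) n (a b : 'I_n * 'I_n) :
  same_edge a b -> @edge_mon K n a = @edge_mon K n b.
Proof.
case: a b => [a1 a2] [b1 b2]; rewrite /same_edge /edge_mon /=.
by case/orP=> /andP[/eqP-> /eqP->] //; rewrite mulrC.
Qed.

Lemma sum_eq1 n (a : 'I_n) : (\sum_(v < n) (a == v) = 1)%N.
Proof.
rewrite (bigD1 a) //= eqxx big1 // => v /negbTE; rewrite eq_sym => ->; done.
Qed.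

Lemma sum_degL n (L : seq ('I_n * 'I_n)) : (\sum_(v < n) degL L v = 2 * size L)%N.
Proof.
elim: L => [|x L IH]; first by rewrite big1 // => v _; rewrite /degL big_nil.
rewrite (eq_bigr (fun v => (x.1 == v) + (x.2 == v) + degL L v)%N); last first.
  by move=> v _; rewrite /degL big_cons.
by rewrite !big_split /= !sum_eq1 IH; lia.
Qed.

Lemma sum_le_eq n (f g : 'I_n -> nat) : (forall v, f v <= g v)%N ->
  (\sum_v f v = \sum_v g v)%N -> forall v, f v = g v.
Proof.
move=> H Hs v.
have E : (\sum_v g v = \sum_v f v + \sum_v (g v - f v))%N.
  by rewrite -big_split; apply: eq_bigr => i _ /=; rewrite subnKC.
have : (\sum_v (g v - f v) == 0)%N by rewrite -Hs in E; apply/eqP; lia.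
rewrite sum_nat_eq0 => /forallP /(_ v) /implyP /(_ isT) /eqP.
by have := H v; lia.
Qed.

Lemma ar1 l : ((2 * l + 1).+2 = 2 * l.+1 + 1)%N. Proof. lia. Qed.
Lemma ar2 l : ((2 * l + 2).+2 = 2 * l.+1 + 2)%N. Proof. lia. Qed.
Lemma ar3 l : (2 * (1 + l) + 1 = (2 * l + 1).+2)%N. Proof. lia. Qed.
Lemma ar4 l : (2 * (1 + l) + 2 = (2 * l + 2).+2)%N. Proof. lia. Qed.
Lemma ar5 k r : (r < 2 * k + 1 -> r.+2 < 2 * k.+1 + 1)%N. Proof. lia. Qed.

Lemma rearr (R : comRingType) (a b c d P : R) :
  a * b * (c * d * P) = a * c * (d * b * P).
Proof. by rewrite -!mulrA; congr (_ * _); rewrite mulrCA; congr (_ * _); rewrite !mulrA [b * _]mulrC. Qed.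

Section Main.
Variables (K : fieldType) (n : nat) (G : rel 'I_n).
Hypothesis G_sym : forall u v : 'I_n, G u v = G v u.
Variables (s : nat) (e : 'I_s -> 'I_n * 'I_n).
Hypothesis he : forall i : 'I_s, G (e i).1 (e i).2.

Lemma prod_enum (F : 'I_s -> {mpoly K[n]}) :
  \prod_(t < s) F t = \prod_(t <- enum 'I_s) F t.
Proof. by rewrite big_enum. Qed.

Lemma dir1 i j :
  ideal_pow (@edge_ideal K n G) s.+1 ('X_i * 'X_j * \prod_(t < s) @edge_mon K n (e t)) ->
  G i j \/ even_connected G e i j.
Proof.
move/Qpow.
set L0 := (i, j) :: [seq e t | t <- enum 'I_s].
have -> : 'X_i * 'X_j * \prod_(t < s) @edge_mon K n (e t) = 'X_[mL L0].
  by rewrite -prod_edge big_cons big_map prod_enum.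
move=> /(_ (mL L0)); rewrite msuppX mem_seq1 eqxx => /(_ isT) [L [szL HL Hle]].
have Hle' : forall v, (degL L v <= degL L0 v)%N by move=> v; rewrite -(mLE L0); exact: Hle.
have Heq := sum_le_eq Hle'; rewrite !sum_degL szL /L0 /= size_map size_enum_ord in Heq.
have {}Heq := Heq erefl.
apply: W_final => //; apply: (extract G_sym he (F := L)) => //.
- exact: enum_uniq.
- by rewrite szL size_enum_ord.
- move=> v; rewrite Heq /L0 /degL big_cons big_map /degE /=. by [].
Qed.

Lemma dir2 k (p : nat -> 'I_n) (idx : seq 'I_s) :
  (forall l, (l < k)%N -> exists i, same_edge (p (2 * l + 1)%N, p (2 * l + 2)%N) (e i)) ->
  (forall i, count (fun l => same_edge (p (2 * l + 1)%N, p (2 * l + 2)%N) (e i)) (iota 0 k)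
             <= count (fun j => same_edge (e j) (e i)) idx)%N ->
  (forall r, (r < 2 * k + 1)%N -> G (p r) (p r.+1)) ->
  exists L : seq ('I_n * 'I_n), [/\ size L = (size idx).+1, forall x, x \in L -> G x.1 x.2 &
     'X_(p 0%N) * 'X_(p (2 * k + 1)%N) * \prod_(t <- idx) @edge_mon K n (e t)
       = \prod_(x <- L) @edge_mon K n x].
Proof.
elim: k p idx => [|k IH] p idx Hstep Hcount Hedges.
  exists ((p 0%N, p 1%N) :: [seq e t | t <- idx]); split.
  - by rewrite /= size_map.
  - move=> x; rewrite inE => /orP[/eqP -> /=|/mapP [t _ ->] //].
    exact: Hedges.
  - by rewrite big_cons big_map.
have [i0 h0] := Hstep 0%N isT.
have : (0 < count (fun j => same_edge (e j) (e i0)) idx)%N.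
  have := Hcount i0; rewrite /= h0 /=.
  by move/(leq_trans _); apply; rewrite ltnS leq_addr.
rewrite -has_count => /hasP [t tI ht].
have st : same_edge (p 1%N, p 2%N) (e t).
  by apply: same_edge_trans h0 _; rewrite same_edge_sym.
have [|||L [szL HL HX]] := IH (fun r => p r.+2) (rem t idx).
- move=> l hl; have [i hi] := Hstep l.+1 hl; exists i.
  by rewrite ar1 ar2.
- move=> i; have := Hcount i.
  rewrite (permP (perm_to_rem tI)) /= -[1%N]addn0 iotaDl count_map.
  have -> : same_edge (p (2 * 0 + 1)%N, p (2 * 0 + 2)%N) (e i) = same_edge (e t) (e i).
    apply/idP/idP => h.
      by apply: same_edge_trans h; rewrite same_edge_sym.
    exact: same_edge_trans st h.
  rewrite (@eq_count _ _ (fun l : nat => same_edge (p (2 * l + 1).+2, p (2 * l + 2).+2) (e i))); last first.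
    move=> l /=.
    by rewrite ar3 ar4.
  by case: (same_edge (e t) (e i)); rewrite /= ?add1n ?add0n ?ltnS.
- by move=> r hr; apply: Hedges; apply: ar5.
exists ((p 0%N, p 1%N) :: L); split.
- by rewrite /= szL size_rem // prednK //; case: (idx) tI.
- by move=> x; rewrite inE => /orP[/eqP -> /=|/HL //]; apply: Hedges.
- rewrite big_cons -HX (perm_big _ (perm_to_rem tI)) big_cons -(same_edge_mon K st).
  rewrite -ar1.
  by rewrite /edge_mon /=; apply: rearr.
Qed.

End Main.

Theorem lemma6p11 (K : fieldType) (n : nat) (G : rel 'I_n)
  (G_sym : forall u v : 'I_n, G u v = G v u) (G_irr : forall u : 'I_n, G u u = false)
  (s : nat) (hs : (1 <= s)%N) (e : 'I_s -> 'I_n * 'I_n)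
  (he : forall i : 'I_s, G (e i).1 (e i).2) :
  let J := colon (ideal_pow (@edge_ideal K n G) s.+1)
                 (\prod_(i < s) @edge_mon K n (e i)) in
  forall f : {mpoly K[n + n]}, polarization J f <-> @edge_ideal_G' K n s G e f.
Proof.
move=> J f.
have key1 : forall i j, J ('X_i * 'X_j) -> G i j \/ even_connected G e i j.
  by move=> i j; rewrite /J /colon; apply: (dir1 G_sym he).
have key2 : forall i j, (G i j \/ even_connected G e i j) -> J ('X_i * 'X_j).
  move=> i j H.
  have [k [p [[p0 pk] [hst hc hed]]]] : exists k (p : nat -> 'I_n),
      [/\ p 0%N = i & p (2 * k + 1)%N = j] /\
      [/\ (forall l, (l < k)%N -> exists i0 : 'I_s,
            same_edge (p (2 * l + 1)%N, p (2 * l + 2)%N) (e i0)),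
          (forall i0 : 'I_s,
            (count (fun l => same_edge (p (2 * l + 1)%N, p (2 * l + 2)%N) (e i0))
                   (iota 0 k)
             <= #|[set j0 : 'I_s | same_edge (e j0) (e i0)]|)%N)
        & (forall r, (r < 2 * k + 1)%N -> G (p r) (p r.+1))].
    case: H => [Gij|[k [p [[_ p0 pk] [h1 h2 h3]]]]]; last by exists k, p.
    exists 0%N, (fun r => if r is 0%N then i else j); split; first by split.
    split; [by [] | by [] | ].
    by move=> r; rewrite muln0 add0n ltnS leqn0 => /eqP ->.
  have hc' : forall i0 : 'I_s,
      (count (fun l => same_edge (p (2 * l + 1)%N, p (2 * l + 2)%N) (e i0)) (iota 0 k)
       <= count (fun j0 => same_edge (e j0) (e i0)) (enum 'I_s))%N.
    move=> i0; apply: (leq_trans (hc i0)).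
    rewrite cardsE cardE -size_filter; apply: uniq_leq_size; first exact: enum_uniq.
    by move=> x; rewrite mem_enum mem_filter mem_enum andbT.
  have [L [szL HL HX]] := dir2 K he hst hc' hed.
  rewrite /J /colon; exists [:: (1, \prod_(x <- L) @edge_mon K n x)]; split.
    move=> q; rewrite inE => /eqP -> /=.
    exists [seq @edge_mon K n x | x <- L]; split; [|split].
    - by rewrite size_map szL size_enum_ord.
    - move=> h /mapP [x xL ->]; exists [:: (1, 'X_x.1 * 'X_x.2)]; split.
        move=> q'; rewrite inE => /eqP -> /=; exists x.1, x.2; split => //.
        exact: HL.
      by rewrite big_seq1 mul1r.
    - by rewrite big_map.
  by rewrite big_seq1 mul1r -HX p0 pk prod_enum.
split; move=> [r [Hr ->]]; exists r; split => // q /Hr.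
  case=> [[i [j [ij Jij ->]]] | [k [Jk ->]]].
    case: (key1 i j Jij) => [Gij|ec]; first by left; exists i, j.
    by right; left; exists i, j.
  move: Jk; rewrite expr2 => /key1 [|ec]; first by rewrite G_irr.
  by right; right; exists k.
case=> [[u [v [Guv ->]]] | [[u [v [uv ec ->]]] | [u [ec ->]]]].
- left; exists u, v; split => //; last by apply: key2; left.
  by apply/eqP => h; rewrite h G_irr in Guv.
- by left; exists u, v; split => //; apply: key2; right.
- by right; exists u; split => //; rewrite expr2; apply: key2; right.
Qed.
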